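(* Let $\mathsf{A}\subset GL_2(\mathbb{R})$. Then $\mathscr{R}(\mathsf{A})=\emptyset$ if and only if $\mathsf{A}$ is strongly conformal.
   Context: $\mathcal{S}(\mathsf{A})$ is the semigroup of finite products of elements of $\mathsf{A}$; $\mathscr{S}(\mathsf{A})=\overline{\mathbb{R}\mathcal{S}(\mathsf{A})}\subset M_2(\mathbb{R})$ (closure of all real multiples of elements of $\mathcal{S}(\mathsf{A})$); $\mathscr{R}(\mathsf{A})=\{A\in\mathscr{S}(\mathsf{A}):\operatorname{rank}(A)=1\}$. A set is strongly conformal if there is a single invertible $M$ with $|\det A|^{-1/2}MAM^{-1}\in O(2)$ for all $A$ in the set. *)

(* Defs.v *)
From HB Require Import structures.
From mathcomp Require Import all_boot all_order all_algebra.
From mathcomp Require Import all_classical all_reals topology.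
Import numFieldTopology.Exports.
Set Implicit Arguments. Unset Strict Implicit. Unset Printing Implicit Defensive.
Import Order.TTheory GRing.Theory Num.Theory.
Local Open Scope classical_set_scope.
Local Open Scope ring_scope.

Section Defs.
Variable R : realType.

Definition GL2 : set 'M[R]_2 := [set M | M \in unitmx].

Definition semigroup_of (A : set 'M[R]_2) : set 'M[R]_2 :=
  [set M | exists s : seq 'M[R]_2,
     [/\ s != [::], (forall B, B \in s -> A B) & M = \prod_(B <- s) B]].

Definition scrS (A : set 'M[R]_2) : set 'M[R]_2 :=
  @closure 'M[R]_(2,2) [set (c *: B : 'M[R]_(2,2)) | c in [set: R] & B in semigroup_of A].

Definition scrR (A : set 'M[R]_2) : set 'M[R]_2 :=
  [set M | scrS A M /\ \rank M = 1%N].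

Definition O2 : set 'M[R]_2 := [set Q | Q^T *m Q = 1%:M].

Definition strongly_conformal (A : set 'M[R]_2) : Prop :=
  exists M : 'M[R]_2, M \in unitmx /\
    forall B, A B ->
      O2 ((Num.sqrt `|\det B|)^-1 *: (M *m B *m invmx M)).
End Defs.

(* Main.v *)
Require Import Defs.
From HB Require Import structures.
From mathcomp Require Import all_boot all_order all_algebra.
From mathcomp Require Import all_classical all_reals topology.
From mathcomp Require Import normedtype derive matrix_normedtype.
From mathcomp Require Import ring lra.
Import numFieldTopology.Exports.
Import Order.TTheory GRing.Theory Num.Theory.
Local Open Scope classical_set_scope.
Local Open Scope ring_scope.

Section S.
Variable R : realType.
Implicit Types X Y P : 'M[R]_2.

Lemma ord2 (i : 'I_2) : i = 0 \/ i = 1.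
Proof. case: i => [[|[|//]]] Hi; [left|right]; exact/val_inj. Qed.

Lemma sum2 (F : 'I_2 -> R) : \sum_i F i = F 0 + F 1.
Proof.
rewrite !big_ord_recl big_ord0 addr0.
by have -> : lift ord0 (ord0 : 'I_1) = 1 :> 'I_2 by apply/val_inj.
Qed.

Lemma mx2P X Y : X 0 0 = Y 0 0 -> X 0 1 = Y 0 1 -> X 1 0 = Y 1 0 -> X 1 1 = Y 1 1 -> X = Y.
Proof.
move=> h1 h2 h3 h4; apply/matrixP => i j.
by case: (ord2 i) => ->; case: (ord2 j) => ->.
Qed.

Lemma mul2E X Y i j : (X *m Y) i j = X i 0 * Y 0 j + X i 1 * Y 1 j.
Proof. by rewrite mxE sum2. Qed.

Lemma det2 X : \det X = X 0 0 * X 1 1 - X 0 1 * X 1 0.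
Proof.
rewrite (expand_det_row _ 0) !big_ord_recr big_ord0 /= add0r /cofactor.
rewrite !det_mx11 !mxE /=.
have -> : widen_ord (leqnSn 1) ord_max = 0 :> 'I_2 by apply/val_inj.
have -> : lift 0 (0 : 'I_1) = 1 :> 'I_2 by apply/val_inj.
have -> : ord_max = 1 :> 'I_2 by apply/val_inj.
have -> : lift (1 : 'I_2) (0 : 'I_1) = 0 :> 'I_2 by apply/val_inj.
rewrite expr0 expr1; ring.
Qed.

Lemma tr2 X : \tr X = X 0 0 + X 1 1.
Proof. by rewrite /mxtrace sum2. Qed.

Lemma rank1P X : \rank X = 1%N <-> X != 0 /\ \det X = 0.
Proof.
have r2 : (\rank X <= 2)%N by exact: rank_leq_row.
split.
  move=> r1; split; first by rewrite -mxrank_eq0 r1.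
  apply/eqP; apply: contraT => d0.
  have : X \in unitmx by rewrite unitmxE unitfE.
  by rewrite -row_free_unit /row_free r1.
move=> [X0 d0].
have : (\rank X != 0)%N by rewrite mxrank_eq0.
have : (\rank X != 2)%N.
  apply/negP => /eqP r2'.
  have : X \in unitmx by rewrite -row_free_unit /row_free r2'.
  by rewrite unitmxE unitfE d0 eqxx.
by case: (\rank X) r2 => [|[|[|]]].
Qed.

Lemma vec_mx_cont : continuous (fun v : 'rV[R]_(2*2) => (vec_mx v : 'M[R]_2)).
Proof.
move=> v s /= /nbhs_ballP [e e0 es].
apply/nbhs_ballP; exists e => //= w [_ vw]; apply: es; split => // i j.
rewrite !mxE; exact: vw.
Qed.

Lemma closed_pre {T : topologicalType} (f : T -> R) (D : set R) :
  continuous f -> closed D -> closed [set x | D (f x)].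
Proof. move=> fc Dc; exact: (@preimage_closed _ _ f D (fun x _ => fc x) Dc). Qed.

Lemma cube_closed (r : R) : closed [set X : 'M[R]_2 | forall i j, `|X i j| <= r].
Proof.
have -> : [set X : 'M[R]_2 | forall i j, `|X i j| <= r] = \bigcap_(k in [set: 'I_2 * 'I_2]) [set X : 'M[R]_2 | `|X k.1 k.2| <= r].
  apply/seteqP; split => X /= H.
    by move=> k _; exact: H.
  by move=> i j; exact: (H (i, j)).
apply: closed_bigI => k _.
apply: (@closed_pre _ (fun X : 'M[R]_2 => `|X k.1 k.2|) [set x : R | x <= r]).
  move=> X; apply: continuous_comp; [exact: coord_continuous | exact: (@norm_continuous _ R^o)].
exact: closed_le.
Qed.

Lemma cube_compact (r : R) : compact [set X : 'M[R]_2 | forall i j, `|X i j| <= r].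
Proof.
apply: (@subclosed_compact _ _ (vec_mx @` [set v : 'rV[R]_(2*2) | forall k, `[-r, r]%classic (v 0 k)])).
- exact: cube_closed.
- apply: continuous_compact; first by apply: continuous_subspaceT; exact: vec_mx_cont.
  apply: (@rV_compact _ _ (fun=> `[-r, r]%classic)) => k; exact: segment_compact.
- move=> X HX; exists (mxvec X); last by rewrite mxvecK.
  move=> k; case/mxvec_indexP: k => i j; rewrite mxvecE /= in_itv /=.
  by rewrite -ler_norml HX.
Qed.

Section cont.
Context {T : topologicalType}.
Implicit Types f g : T -> R.
Lemma contD f g : continuous f -> continuous g -> continuous (fun x => f x + g x).
Proof. by move=> cf cg x; apply: (@continuousD _ R^o _ f g x (cf x) (cg x)). Qed.
Lemma contB f g : continuous f -> continuous g -> continuous (fun x => f x - g x).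
Proof. by move=> cf cg x; apply: (@continuousB _ R^o _ f g x (cf x) (cg x)). Qed.
Lemma contM f g : continuous f -> continuous g -> continuous (fun x => f x * g x).
Proof. by move=> cf cg x; apply: (@continuousM _ _ f g x (cf x) (cg x)). Qed.
Lemma contC (c : R) : continuous (fun _ : T => c).
Proof. by move=> x; apply: cst_continuous. Qed.
Lemma contN f : continuous f -> continuous (fun x => - f x).
Proof. by move=> cf x; apply: (@continuousN _ R^o _ f x (cf x)). Qed.
Lemma contA f : continuous f -> continuous (fun x => `|f x|).
Proof. move=> cf x; apply: continuous_comp; [exact: cf | exact: (@norm_continuous _ R^o)]. Qed.

Definition mxcont (F : T -> 'M[R]_2) := forall i j, continuous (fun x => F x i j).

Lemma mxcont_mul F G : mxcont F -> mxcont G -> mxcont (fun x => F x *m G x).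
Proof.
move=> cF cG i j.
have -> : (fun x => (F x *m G x) i j) = (fun x => F x i 0 * G x 0 j + F x i 1 * G x 1 j).
  by apply/funext => x; rewrite mul2E.
by apply: contD; apply: contM.
Qed.
Lemma mxcont_tr F : mxcont F -> mxcont (fun x => (F x)^T).
Proof.
move=> cF i j.
have -> : (fun x => (F x)^T i j) = (fun x => F x j i) by apply/funext => x; rewrite mxE.
exact: cF.
Qed.
Lemma mxcont_cst (M : 'M[R]_2) : mxcont (fun _ => M).
Proof. move=> i j; exact: contC. Qed.
Lemma mxcont_det F : mxcont F -> continuous (fun x => \det (F x)).
Proof.
move=> cF.
have -> : (fun x => \det (F x)) = (fun x => F x 0 0 * F x 1 1 - F x 0 1 * F x 1 0).
  by apply/funext => x; rewrite det2.
by apply: contB; apply: contM.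
Qed.
End cont.

Lemma mxcont_id : mxcont (fun X : 'M[R]_2 => X).
Proof. move=> i j; exact: coord_continuous. Qed.


Lemma sg_ind (A : set 'M[R]_2) (Q : 'M[R]_2 -> Prop) :
  (forall B, A B -> Q B) -> (forall X Y, Q X -> Q Y -> Q (X *m Y)) ->
  forall X, semigroup_of A X -> Q X.
Proof.
move=> HA HM X [s [s0 sA ->]]; move: s0 sA.
elim: s => [//|B s IH] _ sA.
rewrite big_cons.
have QB : Q B by apply: HA; apply: sA; rewrite mem_head.
case: s IH sA => [|B' s'] IH sA; first by rewrite big_nil mulr1.
apply: (HM B); first exact QB.
apply: IH => // C HC; apply: sA; by rewrite in_cons HC orbT.
Qed.

Lemma sg_mul (A : set 'M[R]_2) X Y : semigroup_of A X -> semigroup_of A Y -> semigroup_of A (X *m Y).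
Proof.
move=> [s [s0 sA ->]] [t [t0 tA ->]]; exists (s ++ t); split.
- by case: s s0 sA.
- by move=> B; rewrite mem_cat => /orP [] ?; [apply: sA | apply: tA].
- by rewrite big_cat.
Qed.

Lemma sg_in (A : set 'M[R]_2) B : A B -> semigroup_of A B.
Proof.
move=> AB; exists [:: B]; split => //; last by rewrite big_seq1.
by move=> C; rewrite mem_seq1 => /eqP ->.
Qed.


Lemma trZ (a : R) X : (a *: X)^T = a *: X^T.
Proof. by apply/matrixP => i j; rewrite !mxE. Qed.

Lemma sqsum0 (a b : R) : a * a + b * b = 0 -> a = 0 /\ b = 0.
Proof. move=> h; split; nra. Qed.

Lemma TtY0 Y : Y^T *m Y = 0 -> Y = 0.
Proof.
move=> h.
have e j : Y 0 j = 0 /\ Y 1 j = 0.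
  have := f_equal (fun Z : 'M[R]_2 => Z j j) h; rewrite mul2E !mxE => /sqsum0 //.
apply: mx2P; rewrite mxE; by [case: (e 0) | case: (e 1)].
Qed.

Lemma sqrt_sq (x : R) : Num.sqrt `|x| ^+ 2 = `|x|.
Proof. by rewrite sqr_sqrtr. Qed.

Lemma conf_noR1 (A : set 'M[R]_2) : strongly_conformal A -> scrR A = set0.
Proof.
move=> [M [Mu HM]].
have [P hP] : exists P, M^T *m M = P by eexists.
have dM : \det M != 0 by rewrite -unitfE -unitmxE.
have P00 : 0 < P 0 0.
  rewrite -hP mul2E !mxE.
  have [h|h] := eqVneq (M 0 0) 0.
    have h' : M 1 0 != 0 by apply: contra dM; rewrite det2 h => /eqP ->; rewrite !mul0r mulr0 subrr.
    have : 0 < M 1 0 * M 1 0 by rewrite -expr2 exprn_even_gt0.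
    rewrite h; nra.
  have : 0 < M 0 0 * M 0 0 by rewrite -expr2 exprn_even_gt0.
  nra.
have key1 B : A B -> B^T *m P *m B = `|\det B| *: P.
  move=> AB; have := HM B AB; rewrite /O2 /=.
  set s := Num.sqrt `|\det B|.
  set Q := M *m B *m invmx M.
  move=> HQ.
  have s0 : s != 0.
    apply/eqP => s0; move: HQ; rewrite s0 invr0 !scale0r mulmx0 => /(f_equal (fun Z : 'M[R]_2 => Z 0 0)).
    by rewrite !mxE /= => /eqP; rewrite eq_sym oner_eq0.
  have HQ' : Q^T *m Q = s^+2 *: 1%:M.
    move: HQ; rewrite trZ -scalemxAl -scalemxAr scalerA => /(f_equal (fun Z => s^+2 *: Z)).
    by rewrite scalerA (_ : s ^+ 2 * (s^-1 * s^-1) = 1) ?scale1r //; field.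
  have QM : Q *m M = M *m B by rewrite /Q mulmxKV.
  have E : (Q *m M)^T *m (Q *m M) = s^+2 *: P.
    clearbody Q; rewrite trmx_mul !mulmxA -[M^T *m Q^T *m Q]mulmxA HQ' -scalemxAr mulmx1 -scalemxAl.
    by rewrite hP.
  rewrite QM trmx_mul !mulmxA /s sqrt_sq in E.
  by rewrite -E -hP !mulmxA.
have key2 X : semigroup_of A X -> exists t, X^T *m P *m X = t *: P.
  move: X; apply: (@sg_ind A (fun X => exists t, X^T *m P *m X = t *: P)).
    by move=> B AB; exists `|\det B|; exact: key1.
  move=> X1 X2 [t1 h1] [t2 h2]; exists (t1 * t2).
  have -> : (X1 *m X2)^T *m P *m (X1 *m X2) = X2^T *m (X1^T *m P *m X1) *m X2 by rewrite trmx_mul !mulmxA.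
  by rewrite h1 -scalemxAr -scalemxAl h2 scalerA.
have key3 X : [set (c *: B : 'M[R]_(2,2)) | c in [set: R] & B in semigroup_of A] X ->
    exists t, X^T *m P *m X = t *: P.
  move=> [c _ [B SB <-]]; have [t ht] := key2 B SB; exists (c * c * t).
  by rewrite trZ -scalemxAl -scalemxAl -scalemxAr ht !scalerA.
set T := [set X : 'M[R]_2 | forall i j, P 0 0 * (X^T *m P *m X) i j - (X^T *m P *m X) 0 0 * P i j = 0].
have Tc : closed T.
  have -> : T = \bigcap_(k in [set: 'I_2 * 'I_2]) [set X : 'M[R]_2 | P 0 0 * (X^T *m P *m X) k.1 k.2 - (X^T *m P *m X) 0 0 * P k.1 k.2 = 0].
    apply/seteqP; split => X /= H.
      by move=> k _; exact: H.
    by move=> i j; exact: (H (i, j)).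
  apply: closed_bigI => k _.
  apply: (@closed_pre _ (fun X : 'M[R]_2 => P 0 0 * (X^T *m P *m X) k.1 k.2 - (X^T *m P *m X) 0 0 * P k.1 k.2) [set x : R | x = 0]); last exact: closed_eq.
  have cX : mxcont (fun X : 'M[R]_2 => X^T *m P *m X).
    apply: mxcont_mul; last exact: mxcont_id.
    apply: mxcont_mul; last exact: mxcont_cst.
    apply: mxcont_tr; exact: mxcont_id.
  apply: contB; apply: contM; by [apply: contC | apply: cX].
have ST : scrS A `<=` T.
  rewrite (closure_id T).1 //; apply: closureS => X /key3 [t ht].
  by move=> i j; rewrite ht !mxE; ring.
apply/seteqP; split => // X [/ST XT /rank1P [X0 dX]].
set t := (X^T *m P *m X) 0 0 / P 0 0.
have Xt : X^T *m P *m X = t *: P.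
  have h i j : (X^T *m P *m X) i j = t * P i j.
    have := XT i j; rewrite /t => /eqP; rewrite subr_eq0 => /eqP h.
    by apply: (mulfI (lt0r_neq0 P00)); rewrite mulrA mulrCA mulfV ?(lt0r_neq0 P00) // mulr1 h.
  by apply/matrixP => i j; rewrite h mxE.
have dP : \det P != 0 by rewrite -hP det_mulmx det_tr mulf_neq0.
have t0 : t = 0.
  have := f_equal (@determinant _ _) Xt.
  rewrite !det_mulmx dX mulr0 detZ => /esym /eqP; rewrite mulf_eq0 (negbTE dP) orbF.
  by rewrite expf_eq0 /= => /eqP.
have : (M *m X)^T *m (M *m X) = 0.
  by rewrite trmx_mul !mulmxA -[X^T *m M^T *m M]mulmxA hP Xt t0 scale0r.
move/TtY0 => MX0; apply: (negP X0); apply/eqP.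
by rewrite -(mulKmx Mu X) MX0 mulmx0.
Qed.


Lemma entry_le_norm X i j : `|X i j| <= `|X|.
Proof.
rewrite [leRHS]/Num.norm /= mx_normrE; apply/bigmax_geP; right => /=.
by exists (i, j).
Qed.

Lemma norm_entry X : exists i j, `|X| = `|X i j|.
Proof.
have [X0|X0] := eqVneq (`|X|) 0.
  have := normr0_eq0 X0 => ->; exists 0, 0; by rewrite normr0 mxE normr0.
have [[i j] h] := mx_norm_neq0 X0; by exists i, j.
Qed.

Lemma det_cont : continuous (fun X : 'M[R]_2 => \det X).
Proof. exact: (@mxcont_det _ (fun X : 'M[R]_2 => X) mxcont_id). Qed.

Lemma absdet_cont : continuous (fun X : 'M[R]_2 => `|\det X|).
Proof. exact: (@contA _ (fun X : 'M[R]_2 => \det X) det_cont). Qed.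

Lemma sg_unit (A : set 'M[R]_2) : A `<=` @GL2 R -> forall g, semigroup_of A g -> g \in unitmx.
Proof.
move=> AG; apply: sg_ind; first by move=> B /AG.
by move=> X Y hX hY; rewrite unitmx_mul hX hY.
Qed.

Lemma step1 (A : set 'M[R]_2) : A `<=` @GL2 R -> scrR A = set0 ->
  exists2 K : R, 0 < K & forall g, semigroup_of A g -> forall i j, `|g i j| ^+ 2 <= K * `|\det g|.
Proof.
move=> AG R0.
set K1 := scrS A `&` [set X : 'M[R]_2 | `|X| = 1].
have K1c : compact K1.
  apply: (@subclosed_compact _ _ [set X : 'M[R]_2 | forall i j, `|X i j| <= 1]).
  - apply: closedI; first exact: closed_closure.
    apply: (@closed_pre _ (fun X : 'M[R]_2 => `|X|) [set x : R | x = 1]); last exact: closed_eq.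
    exact: norm_continuous.
  - exact: cube_compact.
  - by move=> X [_ X1] i j; rewrite -X1 entry_le_norm.
have [d d0 Hd] : exists2 d : R, 0 < d & forall X, K1 X -> d <= `|\det X|.
  have [[X0 K1X0]|K1e] := pselect (K1 !=set0); last first.
    by exists 1 => // X K1X; exfalso; apply: K1e; exists X.
  have [X1 X1K Hmin] := @compact_EVT_min _ _ (fun X : 'M[R]_2 => `|\det X|) K1 (ex_intro _ X0 K1X0) K1c
      (continuous_subspaceT absdet_cont).
  exists (`|\det X1|); last by move=> X K1X; apply: Hmin; rewrite inE.
  rewrite normr_gt0; apply/negP => /eqP dX1.
  move: X1K; rewrite inE => -[S1 N1].
  have : scrR A X1.
    split => //; apply/rank1P; split => //.
    by apply/negP => /eqP X10; move: N1; rewrite X10 /= normr0 => /eqP; rewrite eq_sym oner_eq0.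
  by rewrite R0.
exists d^-1; first by rewrite invr_gt0.
move=> g Sg i j.
have gu := @sg_unit A AG g Sg.

have g0 : g != 0.
  apply/negP => /eqP g0; move: gu; rewrite g0 unitmxE det0 unitfE eqxx //.
have n0 : 0 < `|g| by rewrite normr_gt0.
set X := `|g|^-1 *: g.
have K1X : K1 X.
  split.
    apply: subset_closure; exists (`|g|^-1) => //; exists g => //.
  by rewrite /= /X normrZ normfV normr_id mulVf // gt_eqF.
have := Hd X K1X; rewrite /X detZ normrM normrX normfV normr_id => h.
have h2 : `|g i j| ^+ 2 <= `|g| ^+ 2.
  by rewrite lerXn2r ?nnegrE ?normr_ge0 // entry_le_norm.
apply: (le_trans h2).
move: h; rewrite exprVn ler_pdivlMl ?exprn_gt0 // => h.
by rewrite ler_pdivlMl // mulrC.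
Qed.


Definition q (g P : 'M[R]_2) := \tr (g^T *m P *m g).

Lemma qE g P : q g P =
  (g 0 0 * P 0 0 + g 1 0 * P 1 0) * g 0 0 + (g 0 0 * P 0 1 + g 1 0 * P 1 1) * g 1 0 +
  ((g 0 1 * P 0 0 + g 1 1 * P 1 0) * g 0 1 + (g 0 1 * P 0 1 + g 1 1 * P 1 1) * g 1 1).
Proof. by rewrite /q tr2 !mul2E !mxE. Qed.

Lemma q_add g P Q : q g (P + Q) = q g P + q g Q.
Proof. by rewrite /q mulmxDr mulmxDl mxtraceD. Qed.

Lemma q_scale g (a : R) P : q g (a *: P) = a * q g P.
Proof. by rewrite /q -scalemxAr -scalemxAl mxtraceZ. Qed.

Lemma q_sub g P Q : q g (P - Q) = q g P - q g Q.
Proof. by rewrite q_add -scaleN1r q_scale mulN1r. Qed.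

Lemma q_comp g h P : q g (h^T *m P *m h) = q (h *m g) P.
Proof. by rewrite /q trmx_mul !mulmxA. Qed.

Lemma q1 P : q 1%:M P = \tr P.
Proof. by rewrite /q trmx1 mul1mx mulmx1. Qed.

Definition nP (P : 'M[R]_2) := `|P 0 0| + `|P 0 1| + `|P 1 0| + `|P 1 1|.

Lemma entry_le_nP P i j : `|P i j| <= nP P.
Proof.
rewrite /nP; have := normr_ge0 (P 0 0); have := normr_ge0 (P 0 1);
have := normr_ge0 (P 1 0); have := normr_ge0 (P 1 1).
by case: (ord2 i) => ->; case: (ord2 j) => ->; lra.
Qed.

Section Step2.
Variable G : set 'M[R]_2.
Variable L : R.
Hypothesis L0 : 0 <= L.
Hypothesis G1 : G 1%:M.
Hypothesis Gb : forall g, G g -> forall i j, `|g i j| <= L.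
Hypothesis Gdet : forall g, G g -> \det g ^+ 2 = 1.
Hypothesis Gmul : forall g h, G g -> G h -> G (g *m h).

Lemma term_bound g (D : 'M[R]_2) (N : R) a b c d e f : G g -> (forall i j, `|D i j| <= N) ->
  - (L * L * N) <= g a b * D c d * g e f <= L * L * N.
Proof.
move=> Gg DN; have h1 := @Gb g Gg a b; have h2 := @Gb g Gg e f; have h3 := DN c d.
have N0 : 0 <= N by apply: le_trans (DN 0 0); exact: normr_ge0.
rewrite -ler_norml !normrM (_ : L * L * N = L * N * L); last by rewrite mulrAC.
apply: ler_pM; rewrite ?mulr_ge0 ?normr_ge0 //.
apply: ler_pM; rewrite ?normr_ge0 //.
Qed.

Lemma q_bound g (D : 'M[R]_2) (N : R) : G g -> (forall i j, `|D i j| <= N) -> `|q g D| <= 8 * (L * L * N).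
Proof.
move=> Gg DN; rewrite qE ler_norml.
have t a b c d e f := @term_bound g D N a b c d e f Gg DN.
move: (t 0 0 0 0 0 0) (t 1 0 1 0 0 0) (t 0 0 0 1 1 0) (t 1 0 1 1 1 0)
  (t 0 1 0 0 0 1) (t 1 1 1 0 0 1) (t 0 1 0 1 1 1) (t 1 1 1 1 1 1).
rewrite !mulrDl.
move=> /andP[? ?] /andP[? ?] /andP[? ?] /andP[? ?] /andP[? ?] /andP[? ?] /andP[? ?] /andP[? ?].
apply/andP; split; lra.
Qed.

Definition F P := sup [set q g P | g in G].

Lemma F_hs P : has_sup [set q g P | g in G].
Proof.
split; first by exists (q 1%:M P), 1%:M.
exists (8 * (L * L * nP P)) => _ [g Gg <-].
apply: le_trans (ler_norm _) _; apply: q_bound => //; exact: entry_le_nP.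
Qed.

Lemma F_ub g P : G g -> q g P <= F P.
Proof. by move=> Gg; apply: sup_upper_bound; [exact: F_hs | exists g]. Qed.

Lemma F_le P x : (forall g, G g -> q g P <= x) -> F P <= x.
Proof.
move=> h; apply: ge_sup; first by exists (q 1%:M P), 1%:M.
by move=> _ [g Gg <-]; exact: h.
Qed.

Lemma F_lip P P' N : (forall i j, `|P i j - P' i j| <= N) -> F P <= F P' + 8 * (L * L * N).
Proof.
move=> h; apply: F_le => g Gg.
have -> : q g P = q g P' + q g (P - P') by rewrite q_sub addrC subrK.
apply: lerD; first exact: F_ub.
apply: le_trans (ler_norm _) _; apply: q_bound => // i j; rewrite !mxE; exact: h.
Qed.

Lemma F_cont : continuous F.
Proof.
move=> P s /= /nbhs_ballP [e e0 es].
set c := 8 * (L * L) + 1.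
have c0 : 0 < c by rewrite /c; apply: (@lt_le_trans _ _ 1) => //; rewrite lerDr mulr_ge0 ?mulr_ge0.
apply/nbhs_ballP; exists (e / c); first by rewrite /= divr_gt0.
move=> P' [_ hb]; apply: es.
have hN : forall i j, `|P i j - P' i j| <= e / c.
  by move=> i j; apply: ltW; have := hb i j; rewrite /ball /=.
have hN' : forall i j, `|P' i j - P i j| <= e / c.
  by move=> i j; rewrite distrC; exact: hN.
have l1 := @F_lip P P' _ hN; have l2 := @F_lip P' P _ hN'.
rewrite /ball /= ltr_norml.
have ec : 8 * (L * L * (e / c)) < e.
  have r1 : 8 * (L*L) / c < 1 by rewrite ltr_pdivrMr // mul1r /c ltrDl.
  have -> : 8 * (L * L * (e / c)) = 8 * (L*L) / c * e by ring.
  by rewrite gtr_pMl.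
apply/andP; split; lra.
Qed.

Lemma F_scale (a : R) P : 0 <= a -> F (a *: P) <= a * F P.
Proof.
move=> a0; apply: F_le => g Gg; rewrite q_scale; apply: ler_wpM2l => //; exact: F_ub.
Qed.

Lemma F_mid P Q : F (2^-1 *: (P + Q)) <= 2^-1 * (F P + F Q).
Proof.
apply: F_le => g Gg; rewrite q_scale q_add; apply: ler_wpM2l; first by rewrite invr_ge0.
by apply: lerD; exact: F_ub.
Qed.

Lemma F_tr P : \tr P <= F P.
Proof. by rewrite -q1; exact: F_ub. Qed.

Lemma F_inv h P : G h -> F (h^T *m P *m h) <= F P.
Proof. by move=> Gh; apply: F_le => g Gg; rewrite q_comp; apply: F_ub; exact: Gmul. Qed.


Definition Dom (P : 'M[R]_2) := P 0 1 = P 1 0 /\ 0 <= P 0 0 /\ 1 <= \det P.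

Lemma Dom_pos {P : 'M[R]_2} : Dom P -> 0 < P 0 0 /\ 0 < P 1 1.
Proof.
move=> [s [a0 d1]]; rewrite det2 -s in d1.
have a0' : 0 < P 0 0.
  rewrite lt_neqAle a0 andbT; apply/negP => /eqP a0'.
  rewrite -a0' mul0r in d1; nra.
split => //; nra.
Qed.

Lemma tr_cont : continuous (fun P : 'M[R]_2 => \tr P).
Proof.
have -> : (fun P : 'M[R]_2 => \tr P) = (fun P => P 0 0 + P 1 1) by apply/funext => P; rewrite tr2.
by apply: contD; exact: coord_continuous.
Qed.

Lemma invariant_form : exists P, Dom P /\ forall h, G h -> h^T *m P *m h = P.
Proof.
set C := F 1%:M.
set DC := [set P : 'M[R]_2 | P 0 1 - P 1 0 = 0] `&` [set P | 0 <= P 0 0] `&`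
          [set P | 1 <= \det P] `&` [set P | \tr P <= C].
have DCc : closed DC.
  apply: closedI; [apply: closedI; [apply: closedI|]|].
  - apply: (@closed_pre _ (fun P : 'M[R]_2 => P 0 1 - P 1 0) [set x | x = 0]); last exact: closed_eq.
    by apply: contB; exact: coord_continuous.
  - apply: (@closed_pre _ (fun P : 'M[R]_2 => P 0 0) [set x | 0 <= x]); last exact: closed_ge.
    exact: coord_continuous.
  - apply: (@closed_pre _ (fun P : 'M[R]_2 => \det P) [set x | 1 <= x]); last exact: closed_ge.
    exact: det_cont.
  - apply: (@closed_pre _ (fun P : 'M[R]_2 => \tr P) [set x | x <= C]); last exact: closed_le.
    exact: tr_cont.
have DCsub : DC `<=` [set X : 'M[R]_2 | forall i j, `|X i j| <= C].
  move=> P [[[/= s a0] d1] tC] i j.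
  have DP : Dom P by split; [apply/eqP; rewrite -subr_eq0; apply/eqP|].
  have [pa pc] := Dom_pos DP.
  rewrite tr2 in tC; rewrite det2 in d1.
  have s' : P 1 0 = P 0 1 by apply/eqP; rewrite eq_sym -subr_eq0; apply/eqP.
  rewrite s' in d1.
  have hb : `|P 0 1| <= C.
    rewrite ler_norml; apply/andP; split; nra.
  case: (ord2 i) => ->; case: (ord2 j) => ->; rewrite ?s' //.
    by rewrite ger0_norm ?(ltW pa) //; lra.
  by rewrite ger0_norm ?(ltW pc) //; lra.
have DCk : compact DC.
  apply: (subclosed_compact DCc (cube_compact C)); exact: DCsub.
have D1 : DC 1%:M.
  split; [split; [split|]|] => /=.
  - by rewrite !mxE /= subrr.
  - by rewrite mxE.
  - by rewrite det1.
  - by rewrite /C -q1; apply: F_ub.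
have [Ps PsD Pmin] := @compact_EVT_min _ _ F DC (ex_intro _ _ D1) DCk (continuous_subspaceT F_cont).
have PsDC : DC Ps by move: PsD; rewrite inE.
have PsDom : Dom Ps.
  case: PsDC => [[[/= s a0] d1] _]; split; last by [].
  by apply/eqP; rewrite -subr_eq0; apply/eqP.
have Pglob : forall P, Dom P -> F Ps <= F P.
  move=> P DP; have [tC|tC] := leP (\tr P) C.
    apply: Pmin; rewrite inE; case: DP => [s [a0 d1]].
    by split; [split; [split|]|] => //=; rewrite s subrr.
  apply: le_trans (ltW (lt_le_trans tC (F_tr P))).
  by apply: Pmin; rewrite inE.
exists Ps; split => // h Gh.
set W := h^T *m Ps *m h.
have [s [a0 d1]] := PsDom.
have [pa pc] := Dom_pos PsDom.
have dW : \det W = \det Ps.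
  by rewrite /W !det_mulmx det_tr mulrAC -expr2 Gdet ?mul1r.
have WDom : Dom W.
  split; last split.
  - by rewrite /W !mul2E !mxE s; ring.
  - rewrite /W !mul2E !mxE; rewrite det2 -s in d1.
    set x := h 0 0; set y := h 1 0.
    have hq : 0 <= Ps 0 0 * x * x + (Ps 0 1 + Ps 0 1) * x * y + Ps 1 1 * y * y.
      rewrite -(pmulr_rge0 _ pa).
      have -> : Ps 0 0 * (Ps 0 0 * x * x + (Ps 0 1 + Ps 0 1) * x * y + Ps 1 1 * y * y) =
        (Ps 0 0 * x + Ps 0 1 * y) ^+ 2 + (Ps 0 0 * Ps 1 1 - Ps 0 1 * Ps 0 1) * y ^+ 2 by ring.
      apply: addr_ge0; first exact: sqr_ge0.
      apply: mulr_ge0; [lra | exact: sqr_ge0].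
    rewrite -s.
    suff -> : (x * Ps 0 0 + y * Ps 0 1) * x + (x * Ps 0 1 + y * Ps 1 1) * y =
      Ps 0 0 * x * x + (Ps 0 1 + Ps 0 1) * x * y + Ps 1 1 * y * y by [].
    ring.
  - by rewrite dW.
have FW : F W = F Ps.
  by apply/eqP; rewrite eq_le F_inv // Pglob.
clearbody W.
set U := 2^-1 *: (Ps + W).
have FU : F U <= F Ps by apply: le_trans (F_mid _ _) _; rewrite FW; lra.
have [Ws [Wa0 Wd1]] := WDom.
have [wa wc] := Dom_pos WDom.
have Upos : 0 < F U.
  apply: lt_le_trans (F_tr U).
  rewrite tr2 /U !mxE. lra.
have dU : \det U <= \det Ps.
  rewrite leNgt; apply/negP => dU.
  set t := Num.sqrt (\det U).
  have dU0 : 0 <= \det U by lra.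
  have t1 : 1 < t.
    have t0 : 0 <= t by exact: sqrtr_ge0.
    have tt : t * t = \det U by rewrite -expr2 sqr_sqrtr.
    nra.
  set U' := t^-1 *: U.
  have U'Dom : Dom U'.
    split; last split.
    - by rewrite /U' /U !mxE s Ws.
    - rewrite /U' /U !mxE; apply: mulr_ge0; first by rewrite invr_ge0; lra.
      apply: mulr_ge0; first by rewrite invr_ge0.
      lra.
    - rewrite /U' detZ exprVn sqr_sqrtr // mulVf //; lra.
  have t0 : 0 < t by lra.
  have h1 := Pglob U' U'Dom.
  have h2 : F U' <= t^-1 * F U by apply: F_scale; rewrite invr_ge0 ltW.
  have h3 : t^-1 * F U < F U by rewrite ltr_pdivrMl //; nra.
  lra.
move: dU dW Wd1 d1; rewrite /U detZ !det2 !mxE -Ws -s.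
set a := Ps 0 0; set b := Ps 0 1; set c := Ps 1 1.
set a' := W 0 0; set b' := W 0 1; set c' := W 1 1.
rewrite -/a -/b -/c -/a' -/b' -/c' in pa pc wa wc *.
move=> dU dW Wd1 d1.
set d := a * c - b * b.
have hd : a * c = d + b * b by rewrite /d; ring.
have hd' : a' * c' = d + b' * b' by rewrite /d -dW; ring.
have X2 : a * c' + a' * c - 2 * b * b' <= 2 * d.
  move: dU; rewrite expr2 -invfM ler_pdivrMl ?mulr_gt0 // => dU.
  rewrite /d; nra.
have iden : a * a' * (a * c' + a' * c - 2 * b * b' - 2 * d) = d * (a - a')^+2 + (a' * b - a * b')^+2.
  have -> : a * a' * (a * c' + a' * c - 2 * b * b' - 2 * d) =
    a * a * (a' * c') + a' * a' * (a * c) - 2 * a * a' * b * b' - 2 * a * a' * d by ring.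
  rewrite hd hd'; ring.
have d0 : 0 < d by rewrite /d; lra.
have le0 : a * a' * (a * c' + a' * c - 2 * b * b' - 2 * d) <= 0.
  apply: mulr_ge0_le0; [rewrite mulr_ge0 // ltW // | lra].
rewrite iden in le0.
have s1 : 0 <= d * (a - a')^+2 by apply: mulr_ge0; [lra | exact: sqr_ge0].
have s2 : 0 <= (a' * b - a * b')^+2 by exact: sqr_ge0.
have e1 : (a - a')^+2 = 0.
  have : d * (a - a')^+2 = 0 by lra.
  by move/eqP; rewrite mulf_eq0 gt_eqF //= => /eqP.
have ha : a = a' by move/eqP: e1; rewrite sqrf_eq0 subr_eq0 => /eqP.
have e2 : (a' * b - a * b')^+2 = 0 by rewrite e1 mulr0 add0r in le0; lra.
have hb : b = b'.
  move/eqP: e2; rewrite sqrf_eq0 -ha -mulrBr mulf_eq0 (gt_eqF pa) /= subr_eq0 => /eqP //.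
have hc : c = c'.
  apply: (mulfI (lt0r_neq0 pa)); rewrite hd ha hd' hb //.
apply: mx2P.
- exact: esym ha.
- exact: esym hb.
- rewrite -Ws -s; exact: esym hb.
- exact: esym hc.
Qed.

End Step2.

Definition mk2 (x y z w : R) : 'M[R]_2 :=
  \matrix_(i, j) if i == 0 then (if j == 0 then x else y) else (if j == 0 then z else w).

Lemma mk2E x y z w :
  [/\ mk2 x y z w 0 0 = x, mk2 x y z w 0 1 = y, mk2 x y z w 1 0 = z & mk2 x y z w 1 1 = w].
Proof. by rewrite /mk2 !mxE. Qed.

Lemma chol_aux (r b c : R) : r != 0 -> b / r * (b / r) + (r * r * c - b * b) / (r * r) = c.
Proof. by move=> r0; field. Qed.

Lemma cholesky P : Dom P -> exists M : 'M[R]_2, M \in unitmx /\ M^T *m M = P.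
Proof.
move=> DP; have [pa pc] := Dom_pos DP; have [s [_ d1]] := DP.
set a := P 0 0; set b := P 0 1; set c := P 1 1.
have hdet : \det P = a * c - b * b by rewrite det2 -s.
set ra := Num.sqrt a; set rd := Num.sqrt (\det P / a).
have ra0 : 0 < ra by rewrite sqrtr_gt0.
have da0 : 0 < \det P / a by rewrite divr_gt0 //; lra.
have rd0 : 0 < rd by rewrite sqrtr_gt0.
have raa : ra * ra = a by rewrite -expr2 sqr_sqrtr // ltW.
have rdd : rd * rd = \det P / a by rewrite -expr2 sqr_sqrtr // ltW.
exists (mk2 ra (b / ra) 0 rd); split.
  rewrite unitmxE unitfE det2; have [-> -> -> ->] := mk2E ra (b / ra) 0 rd.
  by rewrite mulr0 subr0 mulf_neq0 // gt_eqF.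
have [e1 e2 e3 e4] := mk2E ra (b / ra) 0 rd.
move: e1 e2 e3 e4; set M := mk2 _ _ _ _; clearbody M => e1 e2 e3 e4.
apply: mx2P; rewrite mul2E !mxE ?e1 ?e2 ?e3 ?e4.
- by rewrite mul0r addr0.
- have r0 : ra != 0 by rewrite gt_eqF.
  by rewrite mul0r addr0 mulrCA mulfV // mulr1.
- have r0 : ra != 0 by rewrite gt_eqF.
  by rewrite mulr0 addr0 -s divfK.
- have r0 : ra != 0 by rewrite gt_eqF.
  have a0 : a != 0 by rewrite gt_eqF.
  rewrite rdd hdet -raa; exact: chol_aux.
Qed.

End S.

Theorem lemma3p1 (R : realType) (A : set 'M[R]_2) :
  A `<=` @GL2 R -> (scrR A = set0 <-> strongly_conformal A).
Proof.
move=> AG; split; last exact: conf_noR1.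
move=> R0.
have [K K0 HK] := @step1 R A AG R0.
set G := [set g : 'M[R]_2 | g = 1%:M \/ exists2 B, semigroup_of A B & g = (Num.sqrt `|\det B|)^-1 *: B].
have L0 : 0 <= 1 + K by lra.
have G1 : G 1%:M by left.
have Gb : forall g, G g -> forall i j, `|g i j| <= 1 + K.
  move=> g [-> | [B SB ->]] i j.
    rewrite mxE; case: (i == j) => /=; rewrite ?normr1 ?normr0; lra.
  have Bu := @sg_unit R A AG _ SB.
  have D0 : 0 < `|\det B| by rewrite normr_gt0 -unitfE -unitmxE.
  set s := Num.sqrt `|\det B|.
  have s0 : 0 < s by rewrite sqrtr_gt0.
  have ss : s * s = `|\det B| by rewrite -expr2 sqr_sqrtr // ltW.
  rewrite mxE normrM normfV (gtr0_norm s0).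
  set x := `|B i j|.
  have x0 : 0 <= x by exact: normr_ge0.
  have hx : x * x <= K * `|\det B| by rewrite -expr2; exact: HK.
  set y := s^-1 * x.
  have y0 : 0 <= y by rewrite mulr_ge0 // invr_ge0 ltW.
  have yy : y * y <= K.
    have -> : y * y = (x * x) / (s * s) by rewrite /y; field; rewrite gt_eqF.
    by rewrite ss ler_pdivrMr // mulrC.
  nra.
have Gdet : forall g, G g -> \det g ^+ 2 = 1.
  move=> g [-> | [B SB ->]]; first by rewrite det1 expr1n.
  have Bu := @sg_unit R A AG _ SB.
  have D0 : 0 < `|\det B| by rewrite normr_gt0 -unitfE -unitmxE.
  rewrite detZ exprVn sqr_sqrtr ?normr_ge0 // exprMn -(real_normK (num_real (\det B))) exprVn mulVf //.
  by rewrite expf_neq0 // gt_eqF.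
have Gmul : forall g h, G g -> G h -> G (g *m h).
  move=> g h [-> | [B1 S1 ->]] [-> | [B2 S2 ->]].
  - by left; rewrite mulmx1.
  - by right; exists B2 => //; rewrite mul1mx.
  - by right; exists B1 => //; rewrite mulmx1.
  - right; exists (B1 *m B2); first exact: sg_mul.
    by rewrite -scalemxAl -scalemxAr scalerA det_mulmx normrM sqrtrM ?normr_ge0 // invfM.
have [P [DP HP]] := @invariant_form R G (1 + K) L0 G1 Gb Gdet Gmul.
have [M [Mu MP]] := @cholesky R P DP.
exists M; split => // B AB.
set g := (Num.sqrt `|\det B|)^-1 *: B.
have Gg : G g by right; exists B => //; exact: sg_in.
have -> : (Num.sqrt `|\det B|)^-1 *: (M *m B *m invmx M) = M *m g *m invmx M.
  by rewrite /g scalemxAl scalemxAr.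
rewrite /O2 /=.
have E : (M *m g *m invmx M)^T *m (M *m g *m invmx M) =
    (invmx M)^T *m (g^T *m (M^T *m M) *m g) *m invmx M by rewrite !trmx_mul !mulmxA.
rewrite E MP HP // -MP.
have -> : (invmx M)^T *m (M^T *m M) *m invmx M = (M *m invmx M)^T *m (M *m invmx M).
  by rewrite !trmx_mul !mulmxA.
by rewrite mulmxV // trmx1 mulmx1.
Qed.
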